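(* Let $p\ge 1$ and $r_p(x)=\sum_{j=0}^{p}\frac{(-\mathrm{i}x)^j}{j!}$ for real $x$. Then there exists $\eta_s>0$ such that $|r_p(x)|<1$ for all $0<x<\pi\eta_s$ if and only if $p=4m$ or $p=4m-1$ for some positive integer $m$. Moreover, if $p\not\equiv 0,3 \pmod 4$, then $|r_p(x)|>1$ for all sufficiently small $x>0$. *)

(* Defs.v *)
From Stdlib Require Import Arith Reals Lra Lia.
Open Scope R_scope.

Record Cplx := mkC { Re : R; Im : R }.

Definition Cadd (z w : Cplx) : Cplx := mkC (Re z + Re w) (Im z + Im w).
Definition Cmul (z w : Cplx) : Cplx :=
  mkC (Re z * Re w - Im z * Im w) (Re z * Im w + Im z * Re w).
Definition Czero : Cplx := mkC 0 0.
Definition Cone : Cplx := mkC 1 0.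
Fixpoint Cpow (z : Cplx) (n : nat) : Cplx :=
  match n with O => Cone | S k => Cmul z (Cpow z k) end.
Definition Cscale (a : R) (z : Cplx) : Cplx := mkC (a * Re z) (a * Im z).
Definition Cnorm (z : Cplx) : R := sqrt (Re z * Re z + Im z * Im z).

Fixpoint Csum (f : nat -> Cplx) (n : nat) : Cplx :=
  match n with O => f O | S k => Cadd (Csum f k) (f (S k)) end.

Definition r_poly (p : nat) (x : R) : Cplx :=
  Csum (fun j => Cscale (/ INR (fact j)) (Cpow (mkC 0 (- x)) j)) p.

(* Main.v *)
Require Import Defs.
From Stdlib Require Import Arith Factorial Reals Lra Lia.
Open Scope R_scope.

Definition u j := Re (Cpow (mkC 0 (-1)) j).
Definition v j := Im (Cpow (mkC 0 (-1)) j).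

Lemma uS j : u (S j) = v j.
Proof. unfold u, v; simpl; ring. Qed.
Lemma vS j : v (S j) = - u j.
Proof. unfold u, v; simpl; ring. Qed.
Lemma u0 : u 0 = 1. Proof. reflexivity. Qed.
Lemma v0 : v 0 = 0. Proof. reflexivity. Qed.

Lemma cpow_re x j : Re (Cpow (mkC 0 (-x)) j) = u j * x ^ j
  /\ Im (Cpow (mkC 0 (-x)) j) = v j * x ^ j.
Proof.
  induction j as [|j [IH1 IH2]].
  - simpl. rewrite u0, v0. split; ring.
  - rewrite uS, vS. simpl. rewrite IH1, IH2. split; ring.
Qed.

Fixpoint A (p : nat) (x : R) : R :=
  match p with O => 1 | S k => A k x + (/ INR (fact (S k)) * u (S k)) * x ^ (S k) end.
Fixpoint B (p : nat) (x : R) : R :=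
  match p with O => 0 | S k => B k x + (/ INR (fact (S k)) * v (S k)) * x ^ (S k) end.

Lemma r_poly_AB p x : Re (r_poly p x) = A p x /\ Im (r_poly p x) = B p x.
Proof.
  induction p as [|k [IH1 IH2]].
  - unfold r_poly; simpl. split; field.
  - change (Re (r_poly (S k) x)) with
      (Re (r_poly k x) + / INR (fact (S k)) * Re (Cpow (mkC 0 (-x)) (S k))).
    change (Im (r_poly (S k) x)) with
      (Im (r_poly k x) + / INR (fact (S k)) * Im (Cpow (mkC 0 (-x)) (S k))).
    destruct (cpow_re x (S k)) as [H1 H2].
    rewrite H1, H2, IH1, IH2. change (A (S k) x) with (A k x + (/ INR (fact (S k)) * u (S k)) * x ^ (S k)). change (B (S k) x) with (B k x + (/ INR (fact (S k)) * v (S k)) * x ^ (S k)). split; ring.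
Qed.

Definition F p x := A p x * A p x + B p x * B p x.

Lemma Cnorm_F p x : Cnorm (r_poly p x) = sqrt (F p x).
Proof. unfold Cnorm, F. destruct (r_poly_AB p x) as [H1 H2]. rewrite H1, H2. reflexivity. Qed.

Lemma deriv_term c n x :
  derivable_pt_lim (fun y => c * y ^ n) x (c * (INR n * x ^ Init.Nat.pred n)).
Proof.
  apply (derivable_pt_lim_scal (fun y => y ^ n)). apply derivable_pt_lim_pow.
Qed.

Lemma fact_simp k : / INR (fact (S k)) * INR (S k) = / INR (fact k).
Proof.
  change (fact (S k)) with (S k * fact k)%nat. rewrite mult_INR.
  field. split. apply INR_fact_neq_0. apply not_0_INR; lia.
Qed.

Lemma dAB p x :
  derivable_pt_lim (A p) x (B p x - (/ INR (fact p) * v p) * x ^ p) /\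
  derivable_pt_lim (B p) x (- (A p x - (/ INR (fact p) * u p) * x ^ p)).
Proof.
  induction p as [|k [IA IB]].
  - simpl. rewrite u0, v0.
    replace (0 - / 1 * 0 * 1) with 0 by field.
    replace (- (1 - / 1 * 1 * 1)) with 0 by field.
    split; apply derivable_pt_lim_const.
  - split.
    + replace (B (S k) x - / INR (fact (S k)) * v (S k) * x ^ S k) with
        ((B k x - (/ INR (fact k) * v k) * x ^ k) +
         (/ INR (fact (S k)) * u (S k)) * (INR (S k) * x ^ Init.Nat.pred (S k))).
      * apply (derivable_pt_lim_plus (A k) (fun y => (/ INR (fact (S k)) * u (S k)) * y ^ (S k))).
        exact IA. apply deriv_term.
      * simpl Init.Nat.pred. rewrite uS.
        replace (/ INR (fact (S k)) * v k * (INR (S k) * x ^ k)) with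
          ((/ INR (fact (S k)) * INR (S k)) * v k * x ^ k) by ring.
        rewrite fact_simp. change (B (S k) x) with (B k x + (/ INR (fact (S k)) * v (S k)) * x ^ (S k)). rewrite vS. ring.
    + replace (- (A (S k) x - / INR (fact (S k)) * u (S k) * x ^ S k)) with
        (- (A k x - (/ INR (fact k) * u k) * x ^ k) +
         (/ INR (fact (S k)) * v (S k)) * (INR (S k) * x ^ Init.Nat.pred (S k))).
      * apply (derivable_pt_lim_plus (B k) (fun y => (/ INR (fact (S k)) * v (S k)) * y ^ (S k))).
        exact IB. apply deriv_term.
      * simpl Init.Nat.pred. rewrite vS.
        replace (/ INR (fact (S k)) * - u k * (INR (S k) * x ^ k)) with
          (- ((/ INR (fact (S k)) * INR (S k)) * u k * x ^ k)) by ring.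
        rewrite fact_simp. change (A (S k) x) with (A k x + (/ INR (fact (S k)) * u (S k)) * x ^ (S k)). rewrite uS. ring.
Qed.

Definition g p x := u p * B p x - v p * A p x.

Lemma dF p x :
  derivable_pt_lim (F p) x (2 * (/ INR (fact p) * x ^ p) * g p x).
Proof.
  destruct (dAB p x) as [IA IB].
  pose proof (derivable_pt_lim_mult _ _ _ _ _ IA IA) as H1.
  pose proof (derivable_pt_lim_mult _ _ _ _ _ IB IB) as H2.
  pose proof (derivable_pt_lim_plus _ _ _ _ _ H1 H2) as H.
  unfold g.
  replace (2 * (/ INR (fact p) * x ^ p) * (u p * B p x - v p * A p x)) with
    ((B p x - / INR (fact p) * v p * x ^ p) * A p x +
      A p x * (B p x - / INR (fact p) * v p * x ^ p) +
      (- (A p x - / INR (fact p) * u p * x ^ p) * B p x +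
       B p x * - (A p x - / INR (fact p) * u p * x ^ p))) by ring.
  exact H.
Qed.

Lemma AB0 p : A p 0 = 1 /\ B p 0 = 0.
Proof.
  induction p as [|k [H1 H2]]; simpl. split; reflexivity.
  rewrite H1, H2. split; ring.
Qed.

Lemma F0 p : F p 0 = 1.
Proof. unfold F. destruct (AB0 p) as [H1 H2]. rewrite H1, H2. ring. Qed.

Lemma uv_vals j : (u j = 1 /\ v j = 0) \/ (u j = 0 /\ v j = -1) \/
  (u j = -1 /\ v j = 0) \/ (u j = 0 /\ v j = 1).
Proof.
  induction j as [|j IH]. left; split; reflexivity.
  rewrite uS, vS. destruct IH as [[H1 H2]|[[H1 H2]|[[H1 H2]|[H1 H2]]]];
    rewrite H1, H2; [right;left|right;right;left|right;right;right|left]; split; ring.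
Qed.

Lemma u_le j : Rabs (u j) <= 1 /\ Rabs (v j) <= 1.
Proof.
  destruct (uv_vals j) as [[H1 H2]|[[H1 H2]|[[H1 H2]|[H1 H2]]]]; rewrite H1, H2;
  split; unfold Rabs; destruct (Rcase_abs _); lra.
Qed.

Lemma pow_le_one x n : 0 <= x <= 1 -> x ^ n <= 1.
Proof.
  intros Hx. induction n; simpl. lra.
  assert (0 <= x ^ n) by (apply pow_le; lra). nra.
Qed.

Lemma term_bound w k x : Rabs w <= 1 -> 0 <= x <= 1 ->
  Rabs ((/ INR (fact (S (S k))) * w) * x ^ (S (S k))) <= x ^ 2.
Proof.
  intros Hw Hx.
  assert (Hf : 1 <= INR (fact (S (S k)))).
  { pose proof (lt_O_fact (S (S k))). apply (le_INR 1). lia. }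
  assert (Hi : 0 < / INR (fact (S (S k))) <= 1).
  { split. apply Rinv_0_lt_compat; lra.
    rewrite <- Rinv_1. apply Rinv_le_contravar; lra. }
  assert (Hp : x ^ S (S k) = x ^ 2 * x ^ k) by (simpl; ring).
  assert (H0 : 0 <= x ^ k) by (apply pow_le; lra).
  assert (H1 : x ^ k <= 1) by (apply pow_le_one; lra).
  rewrite Rabs_mult, Rabs_mult, (Rabs_right (/ _)), ?(Rabs_right (x ^ _)); try lra.
  2: { apply Rle_ge, pow_le; lra. }
  rewrite Hp.
  assert (0 <= x ^ 2) by (apply pow_le; lra).
  assert (0 <= Rabs w) by apply Rabs_pos.
  assert (/ INR (fact (S (S k))) * Rabs w <= 1) by nra.
  assert (0 <= x^2 * x^k) by nra.
  assert (x^2 * x^k <= x^2) by nra.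
  nra.
Qed.

Lemma AB_bound k x : 0 <= x <= 1 ->
  Rabs (A (S k) x - 1) <= INR k * x ^ 2 /\ Rabs (B (S k) x + x) <= INR k * x ^ 2.
Proof.
  intros Hx. induction k as [|k [IH1 IH2]].
  - simpl A; simpl B. rewrite uS, vS, u0, v0. simpl INR.
    replace (1 + / 1 * 0 * (x * 1) - 1) with 0 by field.
    replace (0 + / 1 * - (1) * (x * 1) + x) with 0 by field.
    rewrite Rabs_R0. split; lra.
  - change (A (S (S k)) x) with (A (S k) x + (/ INR (fact (S (S k))) * u (S (S k))) * x ^ (S (S k))).
    change (B (S (S k)) x) with (B (S k) x + (/ INR (fact (S (S k))) * v (S (S k))) * x ^ (S (S k))).
    destruct (u_le (S (S k))) as [Hu Hv].
    pose proof (term_bound _ k x Hu Hx) as T1.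
    pose proof (term_bound _ k x Hv Hx) as T2.
    rewrite S_INR. split.
    + eapply Rle_trans.
      replace (A (S k) x + / INR (fact (S (S k))) * u (S (S k)) * x ^ S (S k) - 1) with
        ((A (S k) x - 1) + / INR (fact (S (S k))) * u (S (S k)) * x ^ S (S k)) by ring.
      apply Rabs_triang. lra.
    + eapply Rle_trans.
      replace (B (S k) x + / INR (fact (S (S k))) * v (S (S k)) * x ^ S (S k) + x) with
        ((B (S k) x + x) + / INR (fact (S (S k))) * v (S (S k)) * x ^ S (S k)) by ring.
      apply Rabs_triang. lra.
Qed.

Lemma u4 n : u (S (S (S (S n)))) = u n /\ v (S (S (S (S n)))) = v n.
Proof. split. rewrite uS, vS, uS, vS; ring. rewrite vS, uS, vS, uS; ring. Qed.

Lemma uper q r : u (4 * q + r) = u r /\ v (4 * q + r) = v r.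
Proof.
  induction q as [|q [IH1 IH2]]. simpl. split; reflexivity.
  replace (4 * S q + r)%nat with (S (S (S (S (4 * q + r))))) by lia.
  destruct (u4 (4 * q + r)) as [H1 H2]. rewrite H1, H2. split; assumption.
Qed.

Lemma Rabs_le_between' a b : Rabs a <= b -> - b <= a <= b.
Proof. unfold Rabs; destruct (Rcase_abs a); lra. Qed.

Lemma key p (hp : (1 <= p)%nat) x : 0 < x < / (INR p + 1) ->
  ((p mod 4 = 0 \/ p mod 4 = 3)%nat -> F p x < 1) /\
  ((p mod 4 = 1 \/ p mod 4 = 2)%nat -> F p x > 1).
Proof.
  intros Hx.
  assert (Hp1 : 1 <= INR p) by (apply (le_INR 1); lia).
  assert (Hd : / (INR p + 1) * (INR p + 1) = 1) by (field; lra).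
  assert (Hdp : 0 < / (INR p + 1)) by (apply Rinv_0_lt_compat; lra).
  assert (Hx1 : x < 1) by nra.
  destruct (MVT_cor2 (F p) (fun c => 2 * (/ INR (fact p) * c ^ p) * g p c) 0 x)
    as [c [Hc Hcx]]; [lra| intros; apply dF |].
  rewrite F0 in Hc.
  assert (Ht : 0 < / INR (fact p) * c ^ p).
  { apply Rmult_lt_0_compat. apply Rinv_0_lt_compat, INR_fact_lt_0. apply pow_lt; lra. }
  destruct p as [|k]; [lia|].
  destruct (AB_bound k c) as [HA HB]; [lra|].
  apply Rabs_le_between' in HA. apply Rabs_le_between' in HB.
  assert (Hk : INR k * c < 1).
  { rewrite S_INR in Hd, Hx. assert (0 <= INR k) by apply pos_INR. nra. }
  assert (Hk2 : INR k * c ^ 2 < c) by (simpl; nra).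
  set (p := S k) in *.
  pose proof (Nat.div_mod_eq p 4) as Hdm.
  assert (Hr : (p mod 4 < 4)%nat) by (apply Nat.mod_upper_bound; lia).
  destruct (uper (p / 4) (p mod 4)) as [Hu Hv].
  rewrite <- Hdm in Hu, Hv.
  unfold g in Hc.
  assert (HF : F p x - 1 = 2 * (/ INR (fact p) * c ^ p) * x * (u p * B p c - v p * A p c)) by lra.
  clearbody p.
  destruct (p mod 4) as [|[|[|[|r]]]] eqn:E; [| | | |lia]; rewrite Hu, Hv in HF;
  unfold u, v in HF; simpl in HF; split; intros Hm; try lia.
  - assert (0 < 2 * (/ INR (fact p) * c ^ p) * x) by nra. nra.
  - assert (0 < 2 * (/ INR (fact p) * c ^ p) * x) by nra. nra.
  - assert (0 < 2 * (/ INR (fact p) * c ^ p) * x) by nra. nra.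
  - assert (0 < 2 * (/ INR (fact p) * c ^ p) * x) by nra. nra.
Qed.

Theorem mainTheorem3 (p : nat) (hp : (1 <= p)%nat) :
  ((exists eta_s : R, 0 < eta_s /\
      forall x : R, 0 < x < PI * eta_s -> Cnorm (r_poly p x) < 1)
   <-> (exists m : nat, (1 <= m)%nat /\ (p = (4 * m)%nat \/ p = (4 * m - 1)%nat)))
  /\
  ((p mod 4 <> 0)%nat /\ (p mod 4 <> 3)%nat ->
     exists delta : R, 0 < delta /\
       forall x : R, 0 < x < delta -> Cnorm (r_poly p x) > 1).
Proof.
  assert (Hp1 : 1 <= INR p) by (apply (le_INR 1); lia).
  assert (Hdp : 0 < / (INR p + 1)) by (apply Rinv_0_lt_compat; lra).
  assert (HFpos : forall x, 0 <= F p x) by (intros; unfold F; nra).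
  pose proof (Nat.div_mod_eq p 4) as Hdm.
  assert (Hr : (p mod 4 < 4)%nat) by (apply Nat.mod_upper_bound; lia).
  assert (Part2 : (p mod 4 <> 0)%nat /\ (p mod 4 <> 3)%nat ->
     exists delta : R, 0 < delta /\
       forall x : R, 0 < x < delta -> Cnorm (r_poly p x) > 1).
  { intros [H0 H3]. exists (/ (INR p + 1)). split; [exact Hdp|].
    intros x Hx. rewrite Cnorm_F. destruct (key p hp x Hx) as [_ K].
    assert (F p x > 1) by (apply K; lia).
    pose proof (HFpos x). rewrite <- sqrt_1. apply sqrt_lt_1; lra. }
  split; [|exact Part2]. split.
  - intros [eta [Heta H]].
    assert (Hm : (p mod 4 = 0 \/ p mod 4 = 3)%nat).
    { destruct (Nat.eq_dec (p mod 4) 0); [left; assumption|].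
      destruct (Nat.eq_dec (p mod 4) 3); [right; assumption|].
      exfalso. destruct Part2 as [d [Hd Hd2]]; [split; assumption|].
      assert (HPI := PI_RGT_0).
      set (x := Rmin d (PI * eta) / 2).
      assert (Hm1 : Rmin d (PI * eta) <= d) by apply Rmin_l.
      assert (Hm2 : Rmin d (PI * eta) <= PI * eta) by apply Rmin_r.
      assert (0 < Rmin d (PI * eta)) by (apply Rmin_glb_lt; nra).
      assert (A1 := H x ltac:(unfold x; nra)).
      assert (A2 := Hd2 x ltac:(unfold x; nra)). lra. }
    destruct Hm as [Hm|Hm].
    + exists (p / 4)%nat. lia.
    + exists (p / 4 + 1)%nat. lia.
  - intros [m [Hm [E|E]]].
    + assert (p mod 4 = 0)%nat by (subst p; rewrite Nat.mul_comm, Nat.Div0.mod_mul; reflexivity).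
      exists (/ (INR p + 1) / PI). assert (HPI := PI_RGT_0). split.
      apply Rdiv_lt_0_compat; lra.
      intros x Hx. rewrite Cnorm_F.
      assert (Hx' : 0 < x < / (INR p + 1)).
      { replace (PI * (/ (INR p + 1) / PI)) with (/ (INR p + 1)) in Hx by (field; lra). lra. }
      destruct (key p hp x Hx') as [K _].
      assert (F p x < 1) by (apply K; lia).
      pose proof (HFpos x). rewrite <- sqrt_1. apply sqrt_lt_1; lra.
    + assert (p mod 4 = 3)%nat.
      { replace p with (3 + (m - 1) * 4)%nat by lia. rewrite Nat.Div0.mod_add. reflexivity. }
      exists (/ (INR p + 1) / PI). assert (HPI := PI_RGT_0). split.
      apply Rdiv_lt_0_compat; lra.
      intros x Hx. rewrite Cnorm_F.
      assert (Hx' : 0 < x < / (INR p + 1)).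
      { replace (PI * (/ (INR p + 1) / PI)) with (/ (INR p + 1)) in Hx by (field; lra). lra. }
      destruct (key p hp x Hx') as [K _].
      assert (F p x < 1) by (apply K; lia).
      pose proof (HFpos x). rewrite <- sqrt_1. apply sqrt_lt_1; lra.
Qed.
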